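(* Let $S$ be a numerical semigroup with $\mathrm{l}(S)=3$. Then (1) $\{\mathrm{F}(S),\mathrm{h}(S)\}\subseteq\mathrm{PF}(S)\subseteq\{\mathrm{F}(S),\mathrm{h}(S),\tfrac{\mathrm{F}(S)}{2},\mathrm{F}(S)-\mathrm{h}(S)\}$; (2) $\tfrac{\mathrm{F}(S)}{2}\in\mathrm{PF}(S)$ if and only if $\mathrm{h}(S)-\tfrac{\mathrm{F}(S)}{2}\notin S$; (3) $\mathrm{F}(S)-\mathrm{h}(S)\in\mathrm{PF}(S)$ if and only if $2\mathrm{h}(S)-\mathrm{F}(S)\notin S$.
   Context: A numerical semigroup is a subset $S\subseteq\mathbb{N}$ closed under addition with $0\in S$ and $\mathbb{N}\setminus S$ finite; $\mathrm{F}(S)=\max(\mathbb{Z}\setminus S)$. $\mathrm{N}(S)=\{s\in S\mid s<\mathrm{F}(S)\}$, $\mathrm{L}(S)=\{x\in\mathbb{N}\setminus S\mid \mathrm{F}(S)-x\notin \mathrm{N}(S)\}$, $\mathrm{l}(S)=\#\mathrm{L}(S)$. For $\mathrm{l}(S)\ge2$, $\mathrm{h}(S)=\max\{x\in\mathbb{N}\setminus S\mid \mathrm{F}(S)-x\in\mathbb{N}\setminus S,\ x\ne \mathrm{F}(S)/2\}$. $\mathrm{PF}(S)=\{x\in\mathbb{Z}\setminus S\mid x+s\in S \text{ for all } s\in S\setminus\{0\}\}$. *)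

(* Defs.v *)
(* Integers/half-integers are embedded in rat. *)
From HB Require Import structures.
From mathcomp Require Import all_boot all_order all_algebra.
Set Implicit Arguments. Unset Strict Implicit. Unset Printing Implicit Defensive.
Import Order.TTheory GRing.Theory Num.Theory.
Local Open Scope ring_scope.

Definition numerical_semigroup (S : pred nat) : Prop :=
  S 0%N /\ (forall a b, S a -> S b -> S (a + b)%N) /\
  (exists N : nat, forall n, (N <= n)%N -> S n).

Definition isInt (q : rat) : Prop := exists z : int, q = z%:~R.

Definition inS (S : pred nat) (q : rat) : Prop := exists n : nat, q = n%:R /\ S n.

Definition gap (S : pred nat) (q : rat) : Prop := exists n : nat, q = n%:R /\ ~~ S n.

Definition is_frobenius (S : pred nat) (F : rat) : Prop :=
  isInt F /\ ~ inS S F /\ (forall z, isInt z -> F < z -> inS S z).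

Definition inN (S : pred nat) (F : rat) (q : rat) : Prop := inS S q /\ q < F.

Definition inL (S : pred nat) (F : rat) (x : rat) : Prop :=
  gap S x /\ ~ inN S F (F - x).

Definition has_card3 (P : rat -> Prop) : Prop :=
  exists a b c : rat, [/\ a <> b, a <> c, b <> c &
    forall x, P x <-> (x = a \/ x = b \/ x = c)].

Definition is_h (S : pred nat) (F : rat) (h : rat) : Prop :=
  [/\ gap S h, gap S (F - h), h <> F / 2%:R &
    forall x, gap S x -> gap S (F - x) -> x <> F / 2%:R -> x <= h].

Definition inPF (S : pred nat) (x : rat) : Prop :=
  isInt x /\ ~ inS S x /\ (forall s, inS S s -> s <> 0 -> inS S (x + s)).

(* Main.v *)
Require Import Defs.
From Stdlib Require Import Classical.
From HB Require Import structures.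
From mathcomp Require Import all_boot all_order all_algebra ring lra.
Import Order.TTheory GRing.Theory Num.Theory.
Set Implicit Arguments. Unset Strict Implicit.
Local Open Scope ring_scope.

Lemma isIntD (a b : rat) : isInt a -> isInt b -> isInt (a + b).
Proof. by move=> [x ->] [y ->]; exists (x + y); rewrite rmorphD. Qed.
Lemma isIntB (a b : rat) : isInt a -> isInt b -> isInt (a - b).
Proof. by move=> [x ->] [y ->]; exists (x - y); rewrite rmorphB. Qed.
Lemma inS_int (S : pred nat) (a : rat) : inS S a -> isInt a.
Proof. by move=> [n [-> _]]; exists n%:Z. Qed.
Lemma gap_int (S : pred nat) (a : rat) : gap S a -> isInt a.
Proof. by move=> [n [-> _]]; exists n%:Z. Qed.
Lemma inS_ge0 (S : pred nat) (a : rat) : inS S a -> 0 <= a.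
Proof. by move=> [n [-> _]]; rewrite ler0n. Qed.
Lemma inS_gap (S : pred nat) (a : rat) : inS S a -> gap S a -> False.
Proof.
move=> [n [-> Sn]] [m [/eqP]]; rewrite eqr_nat => /eqP <-.
by rewrite Sn.
Qed.
Lemma gap_notS (S : pred nat) (a : rat) : gap S a -> ~ inS S a.
Proof. by move=> g i; apply: (inS_gap i g). Qed.
Lemma gap_gt0 (S : pred nat) (a : rat) : S 0%N -> gap S a -> 0 < a.
Proof.
move=> S0 [n [-> Sn]]; rewrite ltr0n lt0n; apply/negP => /eqP n0.
by move: Sn; rewrite n0 S0.
Qed.
Lemma mk_gap (S : pred nat) (a : rat) : isInt a -> 0 <= a -> ~ inS S a -> gap S a.
Proof.
move=> [z ->]; case: z => [n|n] h1 h2.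
  exists n; split => //; apply/negP => Sn; apply: h2; by exists n.
move: h1; rewrite NegzE rmorphN /= oppr_ge0 => H.
have H2 : ((n.+1)%:~R : rat) = n.+1%:R by [].
by have := ltr0Sn rat n; rewrite -H2; lra.
Qed.
Lemma inS_add (S : pred nat) (a b : rat) : numerical_semigroup S -> inS S a -> inS S b -> inS S (a + b).
Proof.
move=> [_ [Sadd _]] [n [-> Sn]] [m [-> Sm]]; exists (n + m)%N; split.
  by rewrite natrD.
exact: Sadd.
Qed.
Lemma inS_eq (S : pred nat) (a b : rat) : a = b -> inS S a -> inS S b.
Proof. by move=> ->. Qed.

Lemma pig3 (T : Type) (a b c p q x y : T) :
  a <> b -> a <> c -> b <> c -> p <> q ->
  (p = a \/ p = b \/ p = c) -> (q = a \/ q = b \/ q = c) ->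
  (x = a \/ x = b \/ x = c) -> (y = a \/ y = b \/ y = c) ->
  x <> p -> x <> q -> y <> p -> y <> q -> x = y.
Proof.
move=> ab ac bc pq Hp Hq Hx Hy xp xq yp yq.
case: Hp => [?|[?|?]]; case: Hq => [?|[?|?]]; case: Hx => [?|[?|?]];
case: Hy => [?|[?|?]]; subst; congruence.
Qed.

Lemma ex3 (T : Type) (a b c p q : T) :
  a <> b -> a <> c -> b <> c ->
  exists x, (x = a \/ x = b \/ x = c) /\ x <> p /\ x <> q.
Proof.
move=> ab ac bc.
case: (classic (a = p \/ a = q)) => Ha; last first.
  by exists a; split; [left|tauto].
case: (classic (b = p \/ b = q)) => Hb; last first.
  by exists b; split; [right; left|tauto].
exists c; split; first by right; right.
case: Ha => ?; case: Hb => ?; subst; split; congruence.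
Qed.

Lemma pig3b (T : Type) (a b c p q r x : T) :
  a <> b -> a <> c -> b <> c -> p <> q -> p <> r -> q <> r ->
  (p = a \/ p = b \/ p = c) -> (q = a \/ q = b \/ q = c) ->
  (r = a \/ r = b \/ r = c) -> (x = a \/ x = b \/ x = c) ->
  x = p \/ x = q \/ x = r.
Proof.
move=> ab ac bc pq pr qr Hp Hq Hr Hx.
case: Hp => [?|[?|?]]; case: Hq => [?|[?|?]]; case: Hr => [?|[?|?]];
case: Hx => [?|[?|?]]; subst; try congruence; tauto.
Qed.

Theorem proposition16 (S : pred nat) (F h : rat) :
  numerical_semigroup S ->
  is_frobenius S F ->
  has_card3 (inL S F) ->
  is_h S F h ->
  [/\ (inPF S F /\ inPF S h /\
       (forall x, inPF S x ->
          x = F \/ x = h \/ x = F / 2%:R \/ x = F - h)),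
      (inPF S (F / 2%:R) <-> ~ inS S (h - F / 2%:R)) &
      (inPF S (F - h) <-> ~ inS S (2%:R * h - F))].
Proof.
move=> NS [FI [FnS Fbig]] [a [b [c [ab ac bc Habc]]]] [Gh GFh hm hmax].
have S0 : S 0%N by case: NS.
have IS0 : forall s : rat, inS S s -> s <> 0 -> 0 < s.
  by move=> s Ss s0; rewrite lt_neqAle eq_sym; apply/andP; split;
    [apply/eqP | exact: inS_ge0 Ss].
have gapleF : forall x, gap S x -> x <= F.
  move=> x Gx; rewrite leNgt; apply/negP => Fx.
  exact: (inS_gap (Fbig x (gap_int Gx) Fx) Gx).
have LP : forall x, inL S F x <-> gap S x /\ gap S (F - x).
  move=> x; split.
    move=> [Gx nN]; split => //; apply: mk_gap.
    - exact: isIntB (gap_int Gx).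
    - by have := gapleF x Gx; lra.
    - move=> IS; apply: nN; split => //.
      by have := gap_gt0 S0 Gx; lra.
  by move=> [Gx GFx]; split => // -[IS _]; exact: inS_gap IS GFx.
set m := F / 2%:R.
have Fm : F - m = m by rewrite /m; lra.
have hle : F - h <= h.
  apply: hmax => //; first by have -> : F - (F - h) = h by ring.
  by move=> E; apply: hm; rewrite /m in Fm; lra.
have mh : m < h.
  rewrite lt_neqAle; apply/andP; split; first by apply/eqP => E; apply: hm.
  by rewrite /m; lra.
have Lh : inL S F h by apply/LP.
have LFh : inL S F (F - h) by apply/LP; split => //; have -> : F - (F - h) = h by ring.
have Lm : inL S F m.
  have [z [zin [zh zFh]]] := ex3 h (F - h) ab ac bc.
  have Lz : inL S F z by apply/Habc.
  have LFz : inL S F (F - z).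
    move/LP: Lz => [g1 g2]; apply/LP; split => //.
    by have -> : F - (F - z) = z by ring.
  have E : z = F - z.
    apply: (pig3 ab ac bc (p := h) (q := F - h)).
    - by rewrite /m in mh; move=> E; lra.
    - exact/Habc.
    - exact/Habc.
    - exact: zin.
    - exact/Habc.
    - done.
    - done.
    - by move=> E; apply: zFh; lra.
    - by move=> E; apply: zh; lra.
  by have -> : m = z by rewrite /m; lra.
have step3 : forall x, inL S F x -> x = m \/ x = h \/ x = F - h.
  move=> x Lx; apply: (pig3b ab ac bc); try exact/Habc.
  - by move=> E; apply: hm; rewrite -E.
  - by move=> E; lra.
  - by move=> E; lra.
move/LP: Lm => [Gm _].
have ImI := gap_int Gm.
have hI := gap_int Gh.
have FhI := gap_int GFh.
split; [split; [|split] | |].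
- split => //; split => // s Ss s0.
  apply: Fbig; first exact: isIntD FI (inS_int Ss).
  by have := IS0 s Ss s0; lra.
- split => //; split; first exact: gap_notS.
  move=> s Ss s0; apply: NNPP => nS.
  have spos := IS0 s Ss s0.
  have hsI : isInt (h + s) by exact: isIntD hI (inS_int Ss).
  have hsF : h + s <= F.
    rewrite leNgt; apply/negP => H; exact: nS (Fbig _ hsI H).
  have hsF' : h + s <> F.
    move=> E; apply: (inS_gap (a := F - h) _ GFh).
    by apply: (inS_eq _ Ss); rewrite -E; ring.
  have hsF2 : h + s < F by rewrite lt_neqAle hsF andbT; apply/eqP.
  have hgt0 := gap_gt0 S0 Gh.
  have L1 : inL S F (h + s).
    apply/LP; split; first by apply: mk_gap => //; lra.
    apply: mk_gap; [exact: isIntB | lra |].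
    move=> IS; apply: (inS_gap _ GFh).
    by apply: (inS_eq _ (inS_add NS IS Ss)); ring.
  by case: (step3 _ L1) => [E|[E|E]]; lra.
- move=> x [xI [xnS xPF]].
  case: (eqVneq x F) => [->|xF]; first by left.
  right.
  have xle : x <= F.
    rewrite leNgt; apply/negP => H; exact: xnS (Fbig _ xI H).
  have xlt : x < F by rewrite lt_neqAle xle andbT.
  have nFx : ~ inS S (F - x).
    move=> IS; apply: FnS; apply: (inS_eq _ (xPF _ IS _)); first ring.
    by move=> E; move: xlt; rewrite -subr_gt0 E ltxx.
  have x0 : 0 <= x.
    rewrite leNgt; apply/negP => H; apply: nFx; apply: Fbig; first exact: isIntB.
    lra.
  have Lx : inL S F x.
    apply/LP; split; first exact: mk_gap.
    apply: mk_gap => //; [exact: isIntB | lra].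
  case: (step3 _ Lx) => [E|[E|E]]; tauto.
- split.
  + move=> [_ [_ H]] IS; apply: (gap_notS Gh).
    apply: (inS_eq _ (H _ IS _)); first ring.
    by move=> E; lra.
  + move=> nS; split => //; split; first exact: gap_notS.
    move=> s Ss s0; apply: NNPP => nS2.
    have spos := IS0 s Ss s0.
    have msI : isInt (m + s) by exact: isIntD ImI (inS_int Ss).
    have msF : m + s <= F.
      rewrite leNgt; apply/negP => H; exact: nS2 (Fbig _ msI H).
    have msF' : m + s <> F.
      move=> E; apply: (gap_notS Gm).
      by apply: (inS_eq _ Ss); rewrite /m; lra.
    have msF2 : m + s < F by rewrite lt_neqAle msF andbT; apply/eqP.
    have mgt0 := gap_gt0 S0 Gm.
    have L1 : inL S F (m + s).
      apply/LP; split; first by apply: mk_gap => //; lra.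
      apply: mk_gap; [exact: isIntB | lra |].
      move=> IS; apply: (gap_notS Gm).
      by apply: (inS_eq _ (inS_add NS IS Ss)); rewrite /m; lra.
    case: (step3 _ L1) => [E|[E|E]]; try lra.
    by apply: nS; apply: (inS_eq _ Ss); lra.
- split.
  + move=> [_ [_ H]] IS; apply: (gap_notS Gh).
    apply: (inS_eq _ (H _ IS _)); first ring.
    by move=> E; rewrite /m in mh; lra.
  + move=> nS; split => //; split; first exact: gap_notS.
    move=> s Ss s0; apply: NNPP => nS2.
    have spos := IS0 s Ss s0.
    have ysI : isInt (F - h + s) by exact: isIntD FhI (inS_int Ss).
    have ysF : F - h + s <= F.
      rewrite leNgt; apply/negP => H; exact: nS2 (Fbig _ ysI H).
    have ysF' : F - h + s <> F.
      move=> E; apply: (gap_notS Gh).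
      by apply: (inS_eq _ Ss); lra.
    have ysF2 : F - h + s < F by rewrite lt_neqAle ysF andbT; apply/eqP.
    have Fhgt0 := gap_gt0 S0 GFh.
    have L1 : inL S F (F - h + s).
      apply/LP; split; first by apply: mk_gap => //; lra.
      apply: mk_gap; [exact: isIntB | lra |].
      move=> IS; apply: (gap_notS Gh).
      by apply: (inS_eq _ (inS_add NS IS Ss)); ring.
    case: (step3 _ L1) => [E|[E|E]]; try lra.
    * apply: nS; apply: (inS_eq _ (inS_add NS Ss Ss)); rewrite /m in E; lra.
    * by apply: nS; apply: (inS_eq _ Ss); lra.
Qed.
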